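(* Let $p$ be a prime, $m\geq 1$, and $1\leq r_1<r_2<\dots<r_m$ integers. Let $F(x)=(x-1)\Phi_{p^{r_1}}(x)\Phi_{p^{r_2}}(x)\cdots\Phi_{p^{r_m}}(x)$. If $E$ is a set of roots of $F$ such that $F(\epsilon/\epsilon')=0$ for all $\epsilon,\epsilon'\in E$, then $\#E\leq p^m$.
   Context: $\Phi_s(x)$ denotes the $s$-th cyclotomic polynomial. *)

(* Defs.v *)
From mathcomp Require Import all_boot all_order all_algebra all_field.
Set Implicit Arguments. Unset Strict Implicit. Unset Printing Implicit Defensive.
Import Order.TTheory GRing.Theory Num.Theory.
Local Open Scope ring_scope.

Definition Fpoly (p : nat) (rs : seq nat) : {poly algC} :=
  ('X - 1) * \prod_(r <- rs) map_poly (intr : int -> algC) ('Phi_(p ^ r)%N).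

(* Main.v *)
Require Import Defs.
From mathcomp Require Import all_boot all_order all_algebra all_field zify.
Import Order.TTheory GRing.Theory Num.Theory.
Local Open Scope ring_scope.

Lemma div1_eq (e e' : algC) : e / e' = 1 -> e = e'.
Proof.
have [->|nz] := eqVneq e' 0; first by rewrite invr0 mulr0 => /esym/eqP; rewrite oner_eq0.
by move=> h; rewrite -(divfK nz e) h mul1r.
Qed.

Lemma prim_div_nz (e e' : algC) n : n.-primitive_root (e / e') -> e' != 0 /\ e != 0.
Proof.
move=> pr; have n0 := prim_order_gt0 pr; have := prim_expr_order pr.
have [->|nz] := eqVneq e' 0.
  by rewrite invr0 mulr0 expr0n -(prednK n0) /= => /esym/eqP; rewrite oner_eq0.
have [->|nz'] := eqVneq e 0.
  by rewrite mul0r expr0n -(prednK n0) /= => /esym/eqP; rewrite oner_eq0.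
by [].
Qed.

Lemma prim1 (z : algC) : 1%N.-primitive_root z -> z = 1.
Proof. by move=> pr; have := prim_expr_order pr; rewrite expr1. Qed.

Lemma size_le1 (T : eqType) (E : seq T) : uniq E ->
  (forall e e', e \in E -> e' \in E -> e != e' -> False) -> (size E <= 1)%N.
Proof.
case: E => [|x [|y s]] //= /andP[] ; rewrite inE negb_or => /andP[xy _] _ H.
by case: (H x y); rewrite ?inE ?eqxx ?orbT.
Qed.

Lemma part (T U : eqType) (f : T -> U) (s : seq T) (I : seq U) :
  uniq I -> {subset map f s <= I} ->
  size s = (\sum_(y <- I) count (fun x => f x == y) s)%N.
Proof.
move=> uI; elim: s => [|x s IH] sub /=; first by rewrite big1.
rewrite big_split /= -IH; last by move=> y hy; apply: sub; rewrite inE hy orbT.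
rewrite (bigD1_seq (f x)) //=; last by apply: sub; rewrite inE eqxx.
by rewrite eqxx big1 // => y /negPf; rewrite eq_sym => ->.
Qed.

Lemma max_in (rs : seq nat) : rs != [::] -> (\max_(r <- rs) r) \in rs.
Proof.
elim: rs => // a [|b s] IH _.
  by rewrite big_cons big_nil maxn0 inE.
rewrite [in X in X \in _]big_cons; move: IH; set M := \max_(r <- b :: s) r => IH.
case: (leqP a M) => h.
  by rewrite inE IH ?orbT.
by rewrite inE eqxx.
Qed.

Lemma key p (p1 : (1 < p)%N) n : forall (rs : seq nat) (E : seq algC),
  (size rs <= n)%N -> uniq E ->
  (forall e e', e \in E -> e' \in E -> e != e' ->
     exists2 r, r \in rs & (p ^ r)%N.-primitive_root (e / e')) ->
  (size E <= p ^ n)%N.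
Proof.
have p0 : (0 < p)%N by apply: ltnW.
elim: n => [|n IH] rs E szr uE H.
  move: szr; rewrite leqn0 size_eq0 => /eqP rs0.
  apply: size_le1 => // e e' he he' ne.
  by case: (H e e' he he' ne) => r; rewrite rs0.
have [rs0|rsn0] := eqVneq rs [::].
  apply: (@leq_trans 1); last by rewrite expn_gt0 p0.
  apply: size_le1 => //.
  by move=> e e' he he' ne; case: (H e e' he he' ne) => r; rewrite rs0.
set M := \max_(r <- rs) r.
have MI : M \in rs := @max_in rs rsn0.
have leM r : r \in rs -> (r <= M)%N.
  by move=> h; apply: (@leq_bigmax_seq _ rs xpredT (fun r => r)).
have [M0|Mpos] := posnP M.
  apply: (@leq_trans 1); last by rewrite expn_gt0 p0.
  apply: size_le1 => //.
  move=> e e' he he' ne; case: (H e e' he he' ne) => r /leM.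
  rewrite M0 leqn0 => /eqP -> /prim1 /div1_eq /eqP.
  by rewrite (negPf ne).
pose k := (p ^ M.-1)%N.
pose f := fun e : algC => e ^+ k.
pose rs' := filter (predC1 M) rs.
have szr' : (size rs' <= n)%N.
  have c1 : (0 < count (pred1 M) rs)%N by rewrite -has_count; apply/hasP; exists M => //=.
  have := count_predC (pred1 M) rs.
  have eq : count (predC1 M) rs = count (predC (pred1 M)) rs by apply: eq_count.
  rewrite /rs' size_filter eq => h.
  by rewrite -ltnS (leq_trans _ szr) // -h -add1n leq_add2r c1.
pose I := undup (map f E).
have sE := @part _ _ f E I (undup_uniq _) (fun y h => etrans (mem_undup _ _) h).
rewrite sE.
apply: leq_trans (_ : \sum_(y <- I) p ^ n <= _)%N.
  apply: leq_sum => y _; rewrite -size_filter.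
  apply: (IH rs') => //; first exact: filter_uniq.
  move=> e e'; rewrite !mem_filter => /andP[/eqP fe he] /andP[/eqP fe' he'] ne.
  case: (H e e' he he' ne) => r hr pr; exists r => //.
  rewrite mem_filter hr andbT /=; apply/eqP => rM.
  have [nz' nz] := @prim_div_nz _ _ _ pr.
  have : (e / e') ^+ k == 1.
    rewrite expr_div_n; change (f e / f e' == 1).
    by rewrite fe -fe' divff // expf_neq0.
  rewrite -(prim_order_dvd pr) rM dvdn_Pexp2l //.
  by rewrite leqNgt ltn_predL Mpos.
rewrite big_const_seq count_predT iter_addn_0 expnS mulnC leq_mul2r.
apply/orP; right.
case EE: E => [|e0 E']; first by rewrite /I EE.
have e0E : e0 \in E by rewrite EE inE eqxx.
have roots : all (root ('X^p - ((e0 ^+ (p ^ M))%:P))) I.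
  apply/allP => y; rewrite mem_undup => /mapP [e he ->].
  rewrite /root !hornerE subr_eq0 /f -exprM /k -expnSr prednK //.
  have [->//|ne] := eqVneq e e0.
  case: (H e e0 he e0E ne) => r hr pr.
  have [nz0 _] := @prim_div_nz _ _ _ pr.
  have h1 : (e / e0) ^+ (p ^ M) == 1.
    by rewrite -(prim_order_dvd pr) dvdn_exp2l // leM.
  by rewrite -[e in e ^+ _](divfK nz0) exprMn (eqP h1) mul1r.
have nzP : ('X^p - ((e0 ^+ (p ^ M))%:P)) != 0 :> {poly algC}.
  by rewrite -size_poly_eq0 size_XnsubC.
have := max_poly_roots nzP roots (undup_uniq _).
by rewrite size_XnsubC // ltnS -EE.
Qed.

Lemma root_prodPhi p (rs : seq nat) (z : algC) : prime p ->
  root (\prod_(r <- rs) map_poly (intr : int -> algC) ('Phi_(p ^ r)%N)) z ->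
  exists2 r, r \in rs & (p ^ r)%N.-primitive_root z.
Proof.
move=> pp; elim: rs => [|r rs IH]; first by rewrite big_nil /root hornerE oner_eq0.
rewrite big_cons rootM => /orP[h|h].
  exists r; first by rewrite inE eqxx.
  have n0 : (0 < p ^ r)%N by rewrite expn_gt0 prime_gt0.
  case: (C_prim_root_exists n0) => w pw.
  by move: h; rewrite (Cintr_Cyclotomic pw) (root_cyclotomic pw).
by case: (IH h) => r' h1 h2; exists r' => //; rewrite inE h1 orbT.
Qed.

Theorem mainTheorem4 (p m : nat) (rs : seq nat) (E : seq algC) :
  prime p -> (1 <= m)%N -> size rs = m ->
  all (fun r => 1 <= r)%N rs -> sorted ltn rs ->
  uniq E ->
  (forall e, e \in E -> root (Fpoly p rs) e) ->
  (forall e e', e \in E -> e' \in E -> root (Fpoly p rs) (e / e')) ->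
  (size E <= p ^ m)%N.
Proof.
move=> pp _ szr _ _ uE _ H.
apply: (@key p (prime_gt1 pp) m rs E) => //; first by rewrite szr.
move=> e e' he he' ne.
move: (H e e' he he'); rewrite /Fpoly rootM => /orP[h|h].
  move: h; rewrite /root !hornerE subr_eq0 => /eqP /div1_eq /eqP.
  by rewrite (negPf ne).
exact: root_prodPhi pp h.
Qed.
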